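(* Let $\mu\in(0,1)$ and $\Lambda>0$. For every $x>0$, $$\int_0^\infty\theta_\mu\big(e^{-\Lambda u}\big)e^{-ux}\,du=\frac1\Lambda\,\frac{\pi\sin(\pi\mu)}{\cos\!\big(\pi\sqrt{\mu^2-\tfrac{4x}{\Lambda}}\big)-\cos(\pi\mu)}.$$
   Context: $\theta_\mu(q):=\sum_{n\in\mathbb Z}\big(n+\frac\mu2\big)q^{n(n+\mu)}$ for $|q|<1$. The expression $\cos(\pi\sqrt z)$ denotes the entire function $\sum_{n\ge0}(-\pi^2z)^n/(2n)!$. *)

(* Defs.v *)
From Stdlib Require Import Reals.
From Coquelicot Require Import Coquelicot.
Open Scope R_scope.

Definition theta_term (mu q : R) (n : Z) : R :=
  (IZR n + mu / 2) * Rpower q (IZR n * (IZR n + mu)).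

Definition theta (mu q : R) : R :=
  Series (fun n : nat => theta_term mu q (Z.of_nat n))
  + Series (fun n : nat => theta_term mu q (- Z.of_nat (S n))%Z).

(* cos(pi sqrt z) as the entire function sum_{n>=0} (-pi^2 z)^n / (2n)!. *)
Definition cos_pi_sqrt (z : R) : R :=
  Series (fun n : nat => (- (PI ^ 2) * z) ^ n / INR (Factorial.fact (2 * n))).

(* Main.v *)
Require Import Defs.
From Stdlib Require Import Reals Lra Lia Psatz ZArith.
From Coquelicot Require Import Coquelicot.
Open Scope R_scope.

Fixpoint sk (f : nat -> R) (n : nat) : R :=
  match n with O => 0 | S m => sk f m + f m end.

Lemma sk_sumf (f : nat -> R) n : sk f (S n) = sum_f_R0 f n.
Proof. induction n; simpl in *. ring. rewrite <- IHn. simpl. ring. Qed.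

Lemma sk_ext f g n : (forall k, (k < n)%nat -> f k = g k) -> sk f n = sk g n.
Proof. induction n; simpl; intros H; auto. rewrite IHn by (intros; apply H; lia). rewrite H by lia. auto. Qed.

Lemma sk_plus f g n : sk (fun k => f k + g k) n = sk f n + sk g n.
Proof. induction n; simpl; [ring|rewrite IHn; ring]. Qed.

Lemma sk_scal c f n : sk (fun k => c * f k) n = c * sk f n.
Proof. induction n; simpl; [ring|rewrite IHn; ring]. Qed.

Lemma sk_split f m n : sk f (m + n) = sk f m + sk (fun k => f (m + k)%nat) n.
Proof. induction n; simpl. rewrite Nat.add_0_r; ring. rewrite Nat.add_succ_r; simpl. rewrite IHn; ring. Qed.

Lemma sk_rev f n : sk f n = sk (fun k => f (n - 1 - k)%nat) n.
Proof.
  induction n. reflexivity.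
  change (sk f (S n)) with (sk f n + f n).
  replace (sk (fun k => f (S n - 1 - k)%nat) (S n)) with
    (sk (fun k => f (S n - 1 - k)%nat) (1 + n)) by (f_equal; lia).
  rewrite sk_split. simpl sk at 2.
  rewrite IHn. replace (S n - 1 - 0)%nat with n by lia.
  rewrite (sk_ext (fun k => f (S n - 1 - (1 + k))%nat) (fun k => f (n - 1 - k)%nat)).
  replace (n - 0 - 0)%nat with n by lia. ring. intros k Hk. f_equal. lia.
Qed.

Lemma Series_split (a : nat -> R) N : ex_series a ->
  Series a = sk a N + Series (fun k => a (N + k)%nat).
Proof.
  intros H. destruct N. simpl. rewrite Rplus_0_l. apply Series_ext. auto.
  rewrite (Series_incr_n a (S N)) by (lia || auto). rewrite sk_sumf. reflexivity.
Qed.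

Lemma lim_abs_le {T} (F : (T -> Prop) -> Prop) {FF : ProperFilter F} (g : T -> R) L d :
  filterlim g F (locally L) -> (forall p, Rabs (g p) <= d) -> Rabs L <= d.
Proof.
  intros Hl Hb. destruct (Rle_lt_dec (Rabs L) d) as [h|h]; auto.
  assert (He : 0 < Rabs L - d) by lra.
  apply filterlim_locally with (eps := mkposreal _ He) in Hl.
  destruct (filter_ex _ Hl) as [p Hp]. simpl in Hp.
  unfold ball in Hp; simpl in Hp; unfold AbsRing_ball, abs, minus, plus, opp in Hp; simpl in Hp.
  specialize (Hb p).
  assert (Rabs L <= Rabs (g p) + Rabs (g p + - L)).
  { replace L with (g p + - (g p + - L)) at 1 by ring.
    eapply Rle_trans. apply Rabs_triang. rewrite Rabs_Ropp. lra. }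
  lra.
Qed.

Lemma ball_R (x y : R) (e : R) : ball x e y <-> Rabs (y - x) < e.
Proof. unfold ball; simpl; unfold AbsRing_ball, abs, minus, plus, opp; simpl. tauto. Qed.

Lemma flim_eps {T} (F : (T -> Prop) -> Prop) {FF : Filter F} (f : T -> R) y eps :
  filterlim f F (locally y) -> 0 < eps -> F (fun x => Rabs (f x - y) < eps).
Proof.
  intros H He. pose proof (proj1 (filterlim_locally f y) H (mkposreal _ He)) as H'.
  eapply filter_imp. 2: exact H'. intros x Hx. apply ball_R in Hx. exact Hx.
Qed.

Lemma ex_series_dom (a D : nat -> R) : (forall n, Rabs (a n) <= D n) -> ex_series D -> ex_series a.
Proof. intros H HD. apply (ex_series_le a D); auto. Qed.

Lemma tail_small (D : nat -> R) (eps : R) : ex_series D -> 0 < eps ->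
  exists N, Rabs (Series D - sk D N) < eps.
Proof.
  intros HD He. pose proof (Series_correct _ HD) as H.
  unfold is_series in H. apply (flim_eps _ _ _ eps) in H; auto.
  destruct H as [N HN]. exists (S N). specialize (HN N (le_n _)).
  simpl in HN. rewrite sk_sumf, <- sum_n_Reals.
  rewrite Rabs_minus_sym. exact HN.
Qed.

Lemma sk_lim {T} (F : (T -> Prop) -> Prop) {FF : Filter F} (a : T -> nat -> R) (l : nat -> R) N :
  (forall n, filterlim (fun p => a p n) F (locally (l n))) ->
  filterlim (fun p => sk (a p) N) F (locally (sk l N)).
Proof.
  intros H. induction N; simpl.
  - apply filterlim_const.
  - eapply filterlim_comp_2. apply IHN. apply H. exact (filterlim_plus (K:=R_AbsRing) (V:=R_NormedModule) (sk l N) (l N)).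
Qed.

Lemma tannery {T} (F : (T -> Prop) -> Prop) {FF : ProperFilter F} (a : T -> nat -> R) (l D : nat -> R) :
  (forall n, filterlim (fun p => a p n) F (locally (l n))) ->
  (forall p n, Rabs (a p n) <= D n) -> ex_series D ->
  filterlim (fun p => Series (a p)) F (locally (Series l)).
Proof.
  intros Hl Hb HD.
  assert (HlD : forall n, Rabs (l n) <= D n).
  { intros n. apply (lim_abs_le F (fun p => a p n)); auto. }
  assert (Hexa : forall p, ex_series (a p)) by (intros p; apply (ex_series_dom _ D); auto).
  assert (Hexl : ex_series l) by (apply (ex_series_dom _ D); auto).
  apply filterlim_locally. intros eps.
  assert (He3 : 0 < eps / 3) by (destruct eps; simpl; lra).
  destruct (tail_small D (eps/3) HD He3) as [N HN].
  assert (Htail : forall b : nat -> R, (forall n, Rabs (b n) <= D n) ->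
     Rabs (Series b - sk b N) <= Series D - sk D N).
  { intros b Hbb.
    assert (Hexb : ex_series b) by (apply (ex_series_dom _ D); auto).
    rewrite (Series_split b N Hexb), (Series_split D N HD).
    replace (sk b N + Series (fun k => b (N + k)%nat) - sk b N) with (Series (fun k => b (N + k)%nat)) by ring.
    replace (sk D N + Series (fun k => D (N + k)%nat) - sk D N) with (Series (fun k => D (N + k)%nat)) by ring.
    eapply Rle_trans. apply Series_Rabs.
    apply (ex_series_dom _ (fun k => D (N + k)%nat)). intros; rewrite Rabs_Rabsolu; auto.
    apply ex_series_incr_n; auto.
    apply Series_le. intros; split; [apply Rabs_pos|auto].
    apply ex_series_incr_n; auto. }
  pose proof (sk_lim F a l N Hl) as Hsk.
  apply (flim_eps _ _ _ (eps/3)) in Hsk; auto.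
  eapply filter_imp. 2: exact Hsk. intros p Hp. apply ball_R.
  pose proof (Htail (a p) (Hb p)) as H1. pose proof (Htail l HlD) as H2.
  assert (Rabs (Series (a p) - Series l) <=
     Rabs (Series (a p) - sk (a p) N) + Rabs (sk (a p) N - sk l N) + Rabs (Series l - sk l N)).
  { replace (Series (a p) - Series l) with ((Series (a p) - sk (a p) N) + (sk (a p) N - sk l N) - (Series l - sk l N)) by ring.
    eapply Rle_trans. apply Rabs_triang. unfold Rminus at 1. rewrite <- (Rabs_Ropp (Series l - sk l N)).
    apply Rplus_le_compat_r. apply Rabs_triang. }
  rewrite (Rabs_right (Series D - sk D N)) in HN by (apply Rle_ge; eapply Rle_trans; [apply Rabs_pos|apply H2]).
  lra.
Qed.

Lemma tail_bound (b D : nat -> R) N : (forall n, Rabs (b n) <= D n) -> ex_series D ->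
  Rabs (Series b - sk b N) <= Series D - sk D N.
Proof.
  intros Hbb HD.
  assert (Hexb : ex_series b) by (apply (ex_series_dom _ D); auto).
  rewrite (Series_split b N Hexb), (Series_split D N HD).
  replace (sk b N + Series (fun k => b (N + k)%nat) - sk b N) with (Series (fun k => b (N + k)%nat)) by ring.
  replace (sk D N + Series (fun k => D (N + k)%nat) - sk D N) with (Series (fun k => D (N + k)%nat)) by ring.
  eapply Rle_trans. apply Series_Rabs.
  apply (ex_series_dom _ (fun k => D (N + k)%nat)). intros; rewrite Rabs_Rabsolu; auto.
  apply ex_series_incr_n; auto.
  apply Series_le. intros; split; [apply Rabs_pos|auto].
  apply ex_series_incr_n; auto.
Qed.

Lemma sk_mono (D : nat -> R) N M : (forall n, 0 <= D n) -> (N <= M)%nat -> sk D N <= sk D M.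
Proof.
  intros H HNM. induction HNM. lra. simpl. pose proof (H m). lra.
Qed.

Definition Tf (u e : R) := PI * sin (2*PI*u) / (cosh (2*PI*e) - cos (2*PI*u)).

Lemma cosh_double z : cosh (2*z) = 2 * cosh z ^ 2 - 1.
Proof.
  unfold cosh. replace (2*z) with (z+z) by ring. replace (-(z+z)) with (-z + -z) by ring.
  rewrite !exp_plus. rewrite exp_Ropp. pose proof (exp_pos z). field. lra.
Qed.

Lemma cosh_ge1 z : 1 <= cosh z.
Proof.
  unfold cosh. rewrite exp_Ropp. pose proof (exp_pos z).
  assert (exp z + / exp z - 2 = (exp z - 1)^2 / exp z) by (field; lra).
  assert (0 <= (exp z - 1)^2 / exp z) by (apply Rdiv_le_0_compat; [apply pow2_ge_0 | lra]).
  lra.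
Qed.

Lemma Tf_dup v e : 0 < sin (PI * v) ->
  Tf v e = /2 * (Tf (v/2) (e/2) + Tf ((v+1)/2) (e/2)).
Proof.
  intros Hs. unfold Tf.
  replace (2*PI*v) with (2*(PI*v)) by ring.
  replace (2*PI*e) with (2*(PI*e)) by ring.
  replace (2*PI*(v/2)) with (PI*v) by field.
  replace (2*PI*(e/2)) with (PI*e) by field.
  replace (2*PI*((v+1)/2)) with (PI*v + PI) by field.
  rewrite sin_2a, cos_2a_cos, cosh_double, neg_sin, neg_cos.
  set (y := PI*v) in *. set (ch := cosh (PI*e)).
  assert (Hc : 1 <= ch) by apply cosh_ge1.
  pose proof (sin2 y) as Hsc. unfold Rsqr in Hsc.
  assert (Hcos : cos y * cos y < 1) by nra.
  assert (Hc1 : -1 < cos y < 1) by nra.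
  field. repeat split; nra.
Qed.

Lemma INR_pow2 j : INR (2 ^ j) = 2 ^ j.
Proof. rewrite pow_INR. simpl. f_equal. Qed.

Lemma pow2_pos j : 0 < 2 ^ j.
Proof. apply pow_lt. lra. Qed.

Lemma Tf_iter b e : 0 < b < 1 -> forall j,
  Tf b e = / 2 ^ j * sk (fun k => Tf ((b + INR k) / 2 ^ j) (e / 2 ^ j)) (2 ^ j)%nat.
Proof.
  intros Hb j. induction j.
  - simpl. rewrite Rinv_1, Rmult_1_l, Rplus_0_l. unfold Rdiv; rewrite Rinv_1, !Rmult_1_r. f_equal; ring.
  - rewrite IHj. set (M := (2 ^ j)%nat).
    assert (HM : INR M = 2 ^ j) by apply INR_pow2.
    replace (2 ^ S j)%nat with (M + M)%nat by (unfold M; simpl; lia).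
    rewrite sk_split.
    rewrite (sk_ext (fun k => Tf ((b + INR k) / 2 ^ j) (e / 2 ^ j))
        (fun k => /2 * (Tf ((b + INR k) / 2 ^ S j) (e / 2 ^ S j) +
                       Tf ((b + INR (M + k)%nat) / 2 ^ S j) (e / 2 ^ S j)))).
    + rewrite sk_scal, sk_plus. simpl pow. field. apply pow_nonzero; lra.
    + intros k Hk. rewrite Tf_dup.
      * f_equal. f_equal; f_equal; simpl pow; try (field; apply pow_nonzero; lra).
        rewrite plus_INR, HM. field. apply pow_nonzero; lra.
      * apply sin_gt_0.
        -- apply Rmult_lt_0_compat. apply PI_RGT_0. apply Rdiv_lt_0_compat. pose proof (pos_INR k); lra. apply pow2_pos.
        -- rewrite <- (Rmult_1_r PI) at 2. apply Rmult_lt_compat_l. apply PI_RGT_0.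
           apply Rmult_lt_reg_r with (2 ^ j). apply pow2_pos. unfold Rdiv. rewrite Rmult_assoc, Rinv_l, Rmult_1_r, Rmult_1_l by (apply pow_nonzero; lra).
           rewrite <- HM. assert (INR k + 1 <= INR M). { rewrite <- S_INR. apply le_INR. lia. } lra.
Qed.

Lemma Tf_refl u e : Tf (1 - u) e = - Tf u e.
Proof.
  unfold Tf. replace (2*PI*(1-u)) with (2*PI - 2*PI*u) by ring.
  rewrite sin_minus, cos_minus, sin_2PI, cos_2PI.
  rewrite !Rmult_0_l, Rplus_0_r, !Rmult_1_l. unfold Rdiv. ring.
Qed.

Lemma Tf_pair b e : 0 < b < 1 -> forall j,
  Tf b e = sk (fun k => / 2 ^ S j * (Tf ((INR k + b) / 2 ^ S j) (e / 2 ^ S j)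
                                   - Tf ((INR k + 1 - b) / 2 ^ S j) (e / 2 ^ S j))) (2 ^ j)%nat.
Proof.
  intros Hb j. rewrite (Tf_iter b e Hb (S j)). set (M := (2 ^ j)%nat).
  assert (HM : INR M = 2 ^ j) by apply INR_pow2.
  replace (2 ^ S j)%nat with (M + M)%nat by (unfold M; simpl; lia).
  rewrite sk_split, (sk_rev (fun k => Tf ((b + INR (M + k)%nat) / 2 ^ S j) (e / 2 ^ S j))).
  rewrite Rmult_plus_distr_l, <- !sk_scal, <- sk_plus. apply sk_ext.
  intros k Hk.
  replace (Tf ((b + INR (M + (M - 1 - k))%nat) / 2 ^ S j) (e / 2 ^ S j)) with
     (- Tf ((INR k + 1 - b) / 2 ^ S j) (e / 2 ^ S j)).
  replace ((b + INR k) / 2 ^ S j) with ((INR k + b) / 2 ^ S j) by (f_equal; ring). ring.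
  rewrite <- Tf_refl. f_equal. rewrite plus_INR, minus_INR by lia. rewrite minus_INR by lia.
  rewrite HM. simpl pow. simpl INR. field. apply pow_nonzero; lra.
Qed.

Lemma useq : is_lim_seq (fun j => / 2 ^ S j) 0.
Proof.
  apply (is_lim_seq_ext (fun j => (/2) ^ S j)).
  intros j. rewrite <- Rinv_pow; auto; lra.
  apply (is_lim_seq_incr_1 (fun j => (/2) ^ j)). apply is_lim_seq_geom.
  rewrite Rabs_right; lra.
Qed.

Lemma useq_pos j : 0 < / 2 ^ S j.
Proof. apply Rinv_0_lt_compat, pow_lt; lra. Qed.

Lemma lim_seq_comp0 (f : R -> R) (L : R) (v : nat -> R) :
  is_lim f 0 L -> is_lim_seq v 0 -> (forall j, v j <> 0) -> is_lim_seq (fun j => f (v j)) L.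
Proof.
  intros Hf Hv Hn. apply (is_lim_comp_seq f v 0 L); auto.
  exists 0%nat. intros n _ H. apply (Hn n). injection H; auto.
Qed.

Lemma sinhc_eq z : z <> 0 -> sinh z / z = ((exp z - 1) / z + (exp (- z) - 1) / (- z)) / 2.
Proof. intros H. unfold sinh. field. auto. Qed.

Lemma lim_sinhc (v : nat -> R) : is_lim_seq v 0 -> (forall j, v j <> 0) ->
  is_lim_seq (fun j => sinh (v j) / v j) 1.
Proof.
  intros Hv Hn.
  apply (is_lim_seq_ext (fun j => ((exp (v j) - 1) / v j + (exp (- v j) - 1) / (- v j)) / 2)).
  intros j; rewrite sinhc_eq; auto.
  cut (is_lim_seq (fun j => ((exp (v j) - 1) / v j + (exp (- v j) - 1) / (- v j)) / 2) ((1 + 1) / 2)).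
  { intros Hc. replace ((1 + 1) / 2) with 1 in Hc by field. exact Hc. }
  apply is_lim_seq_div'; [|apply is_lim_seq_const|lra].
  apply is_lim_seq_plus'.
  - apply (lim_seq_comp0 (fun y => (exp y - 1) / y)); auto. apply is_lim_div_expm1_0.
  - apply (lim_seq_comp0 (fun y => (exp y - 1) / y) 1 (fun j => - v j)).
    apply is_lim_div_expm1_0.
    replace 0 with (-0) by ring. apply (is_lim_seq_opp v 0). auto.
    intros j; specialize (Hn j); lra.
Qed.

Lemma cosh_double' z : cosh (2*z) = 1 + 2 * sinh z ^ 2.
Proof.
  unfold cosh, sinh. replace (2*z) with (z+z) by ring. replace (-(z+z)) with (-z + -z) by ring.
  rewrite !exp_plus. rewrite exp_Ropp. pose proof (exp_pos z). field. lra.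
Qed.

Lemma term_identity y e u : 0 < y -> 0 < u -> 0 < sin (PI*y*u) ->
  u * Tf (y * u) (e * u) =
  y * (sin (PI*y*u) / (PI*y*u)) * cos (PI*y*u) /
   (sinh (PI*e*u) ^ 2 / (PI*u) ^ 2 + y ^ 2 * (sin (PI*y*u) / (PI*y*u)) ^ 2).
Proof.
  intros Hy Hu Hs. unfold Tf.
  replace (2*PI*(y*u)) with (2*(PI*y*u)) by ring.
  replace (2*PI*(e*u)) with (2*(PI*e*u)) by ring.
  rewrite sin_2a, cos_2a_sin, cosh_double'.
  pose proof PI_RGT_0.
  assert (0 <= sinh (PI*e*u) ^ 2) by apply pow2_ge_0.
  field. repeat split; try nra.
Qed.

Lemma is_lim_seq_scal0 (v : nat -> R) c : is_lim_seq v 0 -> is_lim_seq (fun j => c * v j) 0.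
Proof.
  intros H. pose proof (is_lim_seq_scal_l v c 0 H) as H'. simpl in H'.
  rewrite Rmult_0_r in H'. exact H'.
Qed.

Lemma term_lim y e : 0 < y -> 0 <= e ->
  is_lim_seq (fun j => / 2 ^ S j * Tf (y / 2 ^ S j) (e / 2 ^ S j)) (y / (y^2 + e^2)).
Proof.
  intros Hy He. pose proof PI_RGT_0 as HPI.
  set (u := fun j => / 2 ^ S j).
  assert (Hu : is_lim_seq u 0) by apply useq.
  assert (Hup : forall j, 0 < u j) by (intros; apply useq_pos).
  assert (Hev : eventually (fun j => y * u j < 1)).
  { assert (Hyi : 0 < / y) by (apply Rinv_0_lt_compat; auto).
    pose proof (flim_eps eventually u 0 (/ y) Hu Hyi) as H.
    eapply filter_imp. 2: exact H. intros j Hj. simpl in Hj.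
    rewrite Rminus_0_r, Rabs_right in Hj by (apply Rle_ge, Rlt_le, Hup).
    apply Rmult_lt_compat_l with (r := y) in Hj; auto. rewrite Rinv_r in Hj; lra. }
  set (Sq := fun j => sin (PI*y*u j) / (PI*y*u j)).
  set (Cq := fun j => cos (PI*y*u j)).
  set (Eq := fun j => sinh (PI*e*u j) ^ 2 / (PI*u j) ^ 2).
  apply (is_lim_seq_ext_loc (fun j => y * Sq j * Cq j / (Eq j + y^2 * Sq j ^ 2))).
  { eapply filter_imp. 2: exact Hev. intros j Hj.
    unfold Sq, Cq, Eq. change (/ 2 ^ S j) with (u j).
    change (y / 2 ^ S j) with (y * u j). change (e / 2 ^ S j) with (e * u j).
    rewrite (term_identity y e (u j)); auto.
    apply sin_gt_0. pose proof (Hup j); apply Rmult_lt_0_compat; nra.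
    rewrite Rmult_assoc. rewrite <- (Rmult_1_r PI) at 2. apply Rmult_lt_compat_l; auto. }
  assert (Hv : is_lim_seq (fun j => PI * y * u j) 0) by (apply is_lim_seq_scal0; auto).
  assert (HS : is_lim_seq Sq 1).
  { apply (lim_seq_comp0 (fun x => sin x / x)). apply is_lim_sinc_0. exact Hv.
    intros j; pose proof (Hup j); apply Rgt_not_eq; apply Rmult_lt_0_compat; nra. }
  assert (HC : is_lim_seq Cq 1).
  { rewrite <- cos_0. apply (is_lim_seq_continuous cos (fun j => PI*y*u j) 0).
    apply continuity_cos. exact Hv. }
  assert (HE : is_lim_seq Eq (e^2)).
  { destruct (Req_dec e 0) as [He0|He0].
    - subst e. apply (is_lim_seq_ext (fun _ => 0)). intros j. unfold Eq.
      replace (PI * 0 * u j) with 0 by ring. unfold sinh. rewrite Ropp_0, Rminus_diag. unfold Rdiv. ring.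
      replace (0^2) with 0 by ring. apply is_lim_seq_const.
    - apply (is_lim_seq_ext (fun j => e^2 * (sinh (PI*e*u j) / (PI*e*u j)) ^ 2)).
      intros j. unfold Eq. pose proof (Hup j). field. split; [lra|nra].
      assert (Hz : is_lim_seq (fun j => sinh (PI*e*u j) / (PI*e*u j)) 1).
      { apply (lim_sinhc (fun j => PI*e*u j)). apply is_lim_seq_scal0; auto.
        intros j; pose proof (Hup j); apply Rgt_not_eq; apply Rmult_lt_0_compat; try nra. }
      cut (is_lim_seq (fun j => e^2 * ((sinh (PI*e*u j) / (PI*e*u j)) * (sinh (PI*e*u j) / (PI*e*u j)))) (e^2 * (1*1))).
      { intros Hc. replace (e^2*(1*1)) with (e^2) in Hc by ring. eapply is_lim_seq_ext; [|exact Hc]. intros; simpl; ring. }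
      apply is_lim_seq_mult'. apply is_lim_seq_const.
      apply is_lim_seq_mult'; auto. }
  replace (y / (y^2 + e^2)) with (y * 1 * 1 / (e^2 + y^2 * 1^2)) by (field; nra).
  apply is_lim_seq_div'.
  - apply is_lim_seq_mult'; auto. apply is_lim_seq_mult'; auto. apply is_lim_seq_const.
  - apply is_lim_seq_plus'; auto. apply is_lim_seq_mult'. apply is_lim_seq_const.
    apply (is_lim_seq_ext (fun j => Sq j * Sq j)). intros; ring.
    replace (1^2) with (1*1) by ring. apply is_lim_seq_mult'; auto.
  - nra.
Qed.

Lemma PI_gt3 : 3 < PI.
Proof. pose proof PI2_3_2. lra. Qed.

Lemma sin_ge_third a : 0 <= a -> a <= 2 -> a / 3 <= sin a.
Proof.
  intros H0 H2. assert (a <= PI) by (pose proof PI_gt3; lra).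
  destruct (SIN a H0 H) as [Hl _]. eapply Rle_trans; [|exact Hl].
  unfold sin_lb, sin_approx, sin_term. simpl sum_f_R0. simpl.
  set (t := a*a).
  assert (0 <= t <= 4) by (unfold t; nra).
  assert (0 <= a * ((2/3 - t/6) + t*t*(42 - t)/5040)).
  { apply Rmult_le_pos; auto. assert (0 <= t*t*(42-t)) by (apply Rmult_le_pos; nra). lra. }
  unfold t in *. lra.
Qed.

Lemma sin_pi_ge u : 0 <= u <= 1/2 -> u <= sin (PI * u).
Proof.
  intros Hu. pose proof PI_gt3. pose proof PI_4.
  assert (PI * u / 3 <= sin (PI * u)) by (apply sin_ge_third; nra). nra.
Qed.

Definition dTf (u e : R) :=
  2 * PI^2 * (cosh (2*PI*e) * cos (2*PI*u) - 1) / (cosh (2*PI*e) - cos (2*PI*u))^2.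

Lemma den_pos u e : 0 < u < 1 -> 0 < cosh (2*PI*e) - cos (2*PI*u).
Proof.
  intros Hu. pose proof (cosh_ge1 (2*PI*e)).
  replace (2*PI*u) with (2*(PI*u)) by ring. rewrite cos_2a_sin.
  assert (0 < sin (PI*u)) by (apply sin_gt_0; pose proof PI_RGT_0; nra). nra.
Qed.

Lemma Tf_deriv u e : 0 < u < 1 -> derivable_pt_lim (fun v => Tf v e) u (dTf u e).
Proof.
  intros Hu. apply is_derive_Reals. pose proof (den_pos u e Hu).
  unfold Tf, dTf. auto_derive. lra.
  assert (Hs : sin (2*PI*u) * sin (2*PI*u) = 1 - cos (2*PI*u) * cos (2*PI*u)).
  { pose proof (sin2 (2*PI*u)) as Hs. unfold Rsqr in Hs. exact Hs. }
  replace (2 * PI ^ 2 * (cosh (2 * PI * e) * cos (2 * PI * u) - 1)) with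
    (2 * PI ^ 2 * (cosh (2 * PI * e) * cos (2 * PI * u) - cos (2*PI*u) * cos (2*PI*u) - sin (2*PI*u) * sin (2*PI*u)))
    by (rewrite Hs; ring).
  field. lra.
Qed.

Lemma dTf_bound u e : 0 < u <= 1/2 -> Rabs (dTf u e) <= 24 / u^2.
Proof.
  intros Hu. pose proof PI_gt3 as H3. pose proof PI_4 as H4.
  pose proof (cosh_ge1 (2*PI*e)) as Hch.
  set (ch := cosh (2*PI*e)) in *.
  assert (Hq : 2 * u^2 <= 1 - cos (2*PI*u)).
  { replace (2*PI*u) with (2*(PI*u)) by ring. rewrite cos_2a_sin.
    assert (u <= sin (PI*u)) by (apply sin_pi_ge; lra). nra. }
  assert (Hq2 : 1 - cos (2*PI*u) <= 2) by (pose proof (COS_bound (2*PI*u)); lra).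
  set (q := 1 - cos (2*PI*u)) in *. set (p := ch - 1).
  assert (Hp : 0 <= p) by (unfold p; lra).
  assert (Hu2 : 0 < u^2) by (apply pow_lt; lra).
  assert (Hqp : 0 < q) by lra.
  unfold dTf. fold ch.
  replace ch with (1 + p) by (unfold p; ring).
  replace (cos (2 * PI * u)) with (1 - q) by (unfold q; ring).
  replace (1 + p - (1 - q)) with (p + q) by ring.
  set (X := (1 + p) * (1 - q) - 1).
  assert (HX : Rabs X * (2 * q) <= 3 * (p+q)^2).
  { assert (0 <= p*q*(2-q)) by (apply Rmult_le_pos; [apply Rmult_le_pos|]; lra).
    assert (0 <= p*q) by (apply Rmult_le_pos; lra).
    unfold X. destruct (Rle_dec 0 ((1 + p) * (1 - q) - 1)) as [h|h].
    - rewrite Rabs_right by lra. nra.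
    - apply Rnot_le_lt in h. rewrite Rabs_left by lra. nra. }
  assert (HD : 0 < (p+q)^2) by (apply pow_lt; lra).
  unfold Rdiv. rewrite Rabs_mult, Rabs_mult, (Rabs_right (/ (p+q)^2)) by (apply Rle_ge, Rlt_le, Rinv_0_lt_compat; auto).
  rewrite (Rabs_right (2 * PI^2)) by (apply Rle_ge; nra).
  assert (Rabs X * / (p+q)^2 <= 3 / (2*q)).
  { apply Rmult_le_reg_r with ((p+q)^2 * (2*q)). nra.
    replace (Rabs X * / (p + q) ^ 2 * ((p + q) ^ 2 * (2 * q))) with (Rabs X * (2*q)) by (field; lra).
    replace (3 / (2 * q) * ((p + q) ^ 2 * (2 * q))) with (3 * (p+q)^2) by (field; lra). auto. }
  assert (3 / (2 * q) <= 3 / (4 * u^2)).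
  { apply Rmult_le_compat_l. lra. apply Rinv_le_contravar; nra. }
  assert (0 <= Rabs X * / (p+q)^2) by (apply Rmult_le_pos; [apply Rabs_pos| apply Rlt_le, Rinv_0_lt_compat; auto]).
  assert (2 * PI^2 * (Rabs X * / (p + q) ^ 2) <= 2 * 16 * (3 / (4 * u^2))).
  { apply Rmult_le_compat; try nra. }
  replace (24 * / u^2) with (2 * 16 * (3 / (4 * u^2))) by (field; lra).
  rewrite Rmult_assoc. auto.
Qed.

Lemma Tf_lip u1 u2 e : 0 < u1 -> u1 < u2 -> u2 <= 1/2 ->
  Rabs (Tf u2 e - Tf u1 e) <= 24 / u1^2 * (u2 - u1).
Proof.
  intros H1 H12 H2.
  destruct (MVT_cor2 (fun v => Tf v e) (fun v => dTf v e) u1 u2 H12) as [c [Hc Hc2]].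
  { intros c Hc. apply Tf_deriv. lra. }
  rewrite Hc. rewrite Rabs_mult, (Rabs_right (u2 - u1)) by lra.
  apply Rmult_le_compat_r. lra.
  eapply Rle_trans. apply dTf_bound. lra.
  apply Rmult_le_compat_l. lra. apply Rinv_le_contravar. apply pow_lt; lra.
  apply pow_incr; lra.
Qed.

Lemma sk_zero n : sk (fun _ => 0) n = 0.
Proof. induction n; simpl; [auto|rewrite IHn; ring]. Qed.

Lemma is_series_finite (c : nat -> R) M :
  is_series (fun k => if (k <? M)%nat then c k else 0) (sk c M).
Proof.
  unfold is_series. apply (filterlim_ext_loc (fun _ => sk c M)).
  - exists M. intros n Hn. rewrite sum_n_Reals, <- sk_sumf.
    replace (S n) with (M + (S n - M))%nat by lia. rewrite sk_split.
    rewrite (sk_ext (fun k => if (M + k <? M)%nat then c (M + k)%nat else 0) (fun _ => 0)).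
    rewrite sk_zero.
    rewrite (sk_ext (fun k => if (k <? M)%nat then c k else 0) c). ring.
    intros k Hk. destruct (Nat.ltb_spec k M); [auto|lia].
    intros k Hk. destruct (Nat.ltb_spec (M + k) M); [lia|auto].
  - apply filterlim_const.
Qed.

Lemma is_series_telescope :
  is_series (fun k => / (INR k + 1) - / (INR k + 2)) 1.
Proof.
  unfold is_series.
  apply (filterlim_ext (fun n => 1 - / (INR n + 2))).
  - intros n. rewrite sum_n_Reals. cut (1 - / (INR n + 2) = sum_f_R0 (fun k => / (INR k + 1) - / (INR k + 2)) n).
    intros H; exact H. induction n.
    + change (sum_f_R0 ?f O) with (f O). cbv beta. rewrite INR_IZR_INZ. simpl IZR. field.
    + rewrite tech5. rewrite <- IHn. rewrite S_INR. field.
      split; pose proof (pos_INR n); lra.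
  - assert (H : is_lim_seq (fun n => 1 - / (INR n + 2)) (1 - 0)).
    { apply is_lim_seq_minus'. apply is_lim_seq_const.
      assert (H2 : is_lim_seq (fun n => INR n + 2) p_infty).
      { eapply is_lim_seq_plus. apply is_lim_seq_INR. apply is_lim_seq_const. simpl. constructor. }
      apply (is_lim_seq_inv _ _ H2). discriminate. }
    rewrite Rminus_0_r in H. exact H.
Qed.

Lemma ex_series_invsq : ex_series (fun k => / (INR k + 1)^2).
Proof.
  apply (ex_series_dom _ (fun k => 2 * (/ (INR k + 1) - / (INR k + 2)))).
  - intros k. pose proof (pos_INR k). rewrite Rabs_right.
    + replace (2 * (/ (INR k + 1) - / (INR k + 2))) with (2 / ((INR k + 1) * (INR k + 2))) by (field; lra).
      apply Rle_trans with (2 / ((INR k + 1) * (2 * (INR k + 1)))).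
      * right. field. lra.
      * unfold Rdiv. apply Rmult_le_compat_l. lra. apply Rinv_le_contravar. nra. nra.
    + apply Rle_ge, Rlt_le, Rinv_0_lt_compat, pow_lt. lra.
  - apply (ex_series_scal_l 2 (fun k => / (INR k + 1) - / (INR k + 2))).
    eexists. apply is_series_telescope.
Qed.

Definition phi (e y : R) := y / (y^2 + e^2).

Theorem Tf_series b e : 0 < b < 1/2 -> 0 <= e ->
  is_series (fun k => phi e (INR k + b) - phi e (INR k + 1 - b)) (Tf b e).
Proof.
  intros Hb He.
  set (l := fun k => phi e (INR k + b) - phi e (INR k + 1 - b)).
  set (a := fun j k => if (k <? 2 ^ j)%nat then / 2 ^ S j * (Tf ((INR k + b) / 2 ^ S j) (e / 2 ^ S j)
                                   - Tf ((INR k + 1 - b) / 2 ^ S j) (e / 2 ^ S j)) else 0).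
  set (D := fun k => 24 / b^2 * / (INR k + 1)^2).
  assert (HSa : forall j, Series (a j) = Tf b e).
  { intros j. unfold a. rewrite (is_series_unique _ _ (is_series_finite _ _)).
    symmetry. apply Tf_pair. lra. }
  assert (HD : ex_series D).
  { unfold D. apply (ex_series_scal_l (24 / b^2) (fun k => / (INR k + 1)^2)). apply ex_series_invsq. }
  assert (Hdom : forall j k, Rabs (a j k) <= D k).
  { intros j k. unfold a, D. pose proof (pos_INR k) as Hk0.
    destruct (Nat.ltb_spec k (2 ^ j)) as [Hk|Hk].
    2: { rewrite Rabs_R0. apply Rmult_le_pos. apply Rlt_le, Rdiv_lt_0_compat. lra. apply pow_lt; lra.
         apply Rlt_le, Rinv_0_lt_compat, pow_lt. lra. }
    set (N := 2 ^ S j). assert (HN : 0 < N) by (apply pow_lt; lra).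
    assert (HkN : INR k + 1 <= N / 2).
    { assert (H2j : INR k + 1 <= 2 ^ j). { rewrite <- INR_pow2, <- S_INR. apply le_INR. lia. }
      assert (HNe : N = 2 * 2^j) by reflexivity. lra. }
    assert (H := Tf_lip ((INR k + b) / N) ((INR k + 1 - b) / N) (e / N)).
    assert (Hu1 : 0 < (INR k + b) / N) by (apply Rdiv_lt_0_compat; lra).
    assert (Hu12 : (INR k + b) / N < (INR k + 1 - b) / N) by (apply Rmult_lt_compat_r; [apply Rinv_0_lt_compat|]; lra).
    assert (Hu2 : (INR k + 1 - b) / N <= 1/2).
    { apply Rmult_le_reg_r with N; auto. unfold Rdiv. rewrite Rmult_assoc, Rinv_l, Rmult_1_r by lra. lra. }
    specialize (H Hu1 Hu12 Hu2).
    rewrite Rabs_mult, Rabs_right by (apply Rle_ge, Rlt_le, Rinv_0_lt_compat; auto).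
    rewrite Rabs_minus_sym.
    replace (24 / ((INR k + b) / N) ^ 2 * ((INR k + 1 - b) / N - (INR k + b) / N)) with
      (N * (24 * (1 - 2*b) / (INR k + b)^2)) in H by (field; lra).
    apply Rle_trans with (/ N * (N * (24 * (1 - 2 * b) / (INR k + b) ^ 2))).
    apply Rmult_le_compat_l. apply Rlt_le, Rinv_0_lt_compat; auto. auto.
    rewrite <- Rmult_assoc, Rinv_l, Rmult_1_l by lra.
    assert (Hkb : b * (INR k + 1) <= INR k + b) by nra.
    assert (0 < b * (INR k + 1)) by nra.
    apply Rle_trans with (24 / (INR k + b)^2).
    - unfold Rdiv. apply Rmult_le_compat_r. apply Rlt_le, Rinv_0_lt_compat, pow_lt; lra. lra.
    - replace (24 / b ^ 2 * / (INR k + 1) ^ 2) with (24 / (b * (INR k + 1))^2) by (field; lra).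
      unfold Rdiv. apply Rmult_le_compat_l. lra. apply Rinv_le_contravar. apply pow_lt; lra.
      apply pow_incr; lra. }
  assert (Hlim : forall k, filterlim (fun j => a j k) eventually (locally (l k))).
  { intros k. cut (is_lim_seq (fun j => a j k) (l k)). intros H; exact H.
    unfold l, phi. apply (is_lim_seq_ext_loc (fun j => / 2 ^ S j * Tf ((INR k + b) / 2 ^ S j) (e / 2 ^ S j)
                         - / 2 ^ S j * Tf ((INR k + 1 - b) / 2 ^ S j) (e / 2 ^ S j))).
    - exists k. intros j Hj. unfold a. destruct (Nat.ltb_spec k (2 ^ j)) as [H|H]. ring.
      pose proof (Nat.pow_gt_lin_r 2 j). assert (2 ^ j <= 2 ^ j)%nat by lia. lia.
    - apply is_lim_seq_minus'; apply term_lim; pose proof (pos_INR k); lra. }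
  pose proof (tannery eventually a l D Hlim Hdom HD) as HT.
  assert (HT' : is_lim_seq (fun j => Series (a j)) (Series l)) by exact HT.
  apply (is_lim_seq_ext _ (fun _ => Tf b e)) in HT'; auto.
  apply is_lim_seq_unique in HT'. rewrite Lim_seq_const in HT'. injection HT' as HT'.
  rewrite HT'. apply Series_correct. apply (ex_series_dom _ D); auto.
  intros k. apply (lim_abs_le eventually (fun j => a j k)); auto.
Qed.

Lemma is_series_extR (a b : nat -> R) l : (forall n, a n = b n) -> is_series a l -> is_series b l.
Proof. intros H Ha. exact (is_series_ext a b l H Ha). Qed.

Lemma is_series_plusR (a b : nat -> R) la lb : is_series a la -> is_series b lb ->
  is_series (fun n => a n + b n) (la + lb).
Proof. intros Ha Hb. exact (is_series_plus a b la lb Ha Hb). Qed.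

Lemma is_series_scalR (c : R) (a : nat -> R) l : is_series a l -> is_series (fun n => c * a n) (c * l).
Proof. intros Ha. exact (is_series_scal c a l Ha). Qed.

Lemma is_series_oppR (a : nat -> R) l : is_series a l -> is_series (fun n => - a n) (- l).
Proof. intros Ha. apply (is_series_extR (fun n => -1 * a n)). intros; ring.
  replace (- l) with (-1 * l) by ring. apply is_series_scalR; auto. Qed.

Lemma cot_series z : 0 < z < 1 ->
  is_series (fun k => / (INR k + z) - / (INR k + 1 - z)) (Tf z 0).
Proof.
  intros Hz.
  assert (Hphi : forall y, 0 < y -> phi 0 y = / y).
  { intros y Hy. unfold phi. field. lra. }
  destruct (Rlt_le_dec z (1/2)) as [h|h].
  - apply (is_series_extR (fun k => phi 0 (INR k + z) - phi 0 (INR k + 1 - z))).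
    intros k. pose proof (pos_INR k). rewrite !Hphi by lra. auto.
    apply Tf_series; lra.
  - destruct (Req_dec z (1/2)) as [He|He].
    + subst z. apply (is_series_extR (fun _ => 0)).
      intros k. cbv beta. replace (INR k + 1 - 1/2) with (INR k + 1/2) by field. ring.
      replace (Tf (1/2) 0) with 0.
      * apply (is_series_extR (fun k => if (k <? 0)%nat then 0 else 0)). intros k; destruct (k <? 0)%nat; auto.
        apply (is_series_finite (fun _ => 0) 0).
      * unfold Tf. replace (2*PI*(1/2)) with PI by field. rewrite sin_PI. unfold Rdiv. ring.
    + replace (Tf z 0) with (- Tf (1 - z) 0).
      2: { rewrite Tf_refl. ring. }
      apply (is_series_extR (fun k => - (phi 0 (INR k + (1 - z)) - phi 0 (INR k + 1 - (1 - z))))).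
      intros k. pose proof (pos_INR k). rewrite !Hphi by lra.
      replace (INR k + 1 - (1 - z)) with (INR k + z) by ring.
      replace (INR k + (1 - z)) with (INR k + 1 - z) by ring. ring.
      apply is_series_oppR. apply Tf_series; lra.
Qed.

Lemma cps_pos z : 0 <= z -> cos_pi_sqrt z = cos (PI * sqrt z).
Proof.
  intros Hz. unfold cos_pi_sqrt, cos.
  destruct (exist_cos (PI * sqrt z)²) as [l Hl]. unfold cos_in in Hl.
  apply is_series_unique. apply is_series_Reals in Hl.
  eapply is_series_extR. 2: exact Hl. intros n.
  cbv beta. unfold cos_n. rewrite Rsqr_mult, Rsqr_sqrt by auto.
  replace (- PI ^ 2 * z) with (-1 * (PI² * z)) by (unfold Rsqr; ring).
  rewrite !Rpow_mult_distr. unfold Rdiv. ring.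
Qed.

Lemma is_series_even (t : nat -> R) l : is_series t l -> (forall m, t (2*m+1)%nat = 0) ->
  is_series (fun m => t (2*m)%nat) l.
Proof.
  intros Ht Hodd.
  assert (Hs' : forall N, sum_f_R0 (fun m => t (2*m)%nat) N = sum_f_R0 t (2*N)).
  { intros N. induction N.
    - simpl. reflexivity.
    - replace (2 * S N)%nat with (S (S (2 * N))) by lia.
      rewrite !tech5. rewrite IHN. replace (S (2 * N)) with (2 * N + 1)%nat by lia.
      rewrite Hodd. replace (S (2*N+1)) with (2 * S N)%nat by lia. ring. }
  assert (Hs : forall N, sum_n (fun m => t (2*m)%nat) N = sum_n t (2*N)).
  { intros N. rewrite !sum_n_Reals. apply Hs'. }
  unfold is_series. apply (filterlim_ext (fun N => sum_n t (2*N))).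
  intros; rewrite Hs; auto.
  apply (is_lim_seq_subseq (sum_n t) l (fun N => (2*N)%nat)); [|exact Ht].
  intros P [N HN]. exists N. intros n Hn. apply HN. lia.
Qed.

Lemma cps_neg z : z <= 0 -> cos_pi_sqrt z = cosh (PI * sqrt (- z)).
Proof.
  intros Hz. set (Y := PI * sqrt (-z)).
  assert (HY2 : Y ^ 2 = PI^2 * (- z)).
  { unfold Y. rewrite Rpow_mult_distr. f_equal. simpl. rewrite Rmult_1_r. apply sqrt_sqrt. lra. }
  pose proof (is_exp_Reals Y) as H1. pose proof (is_exp_Reals (- Y)) as H2.
  unfold is_pseries in H1, H2.
  assert (H : is_series (fun n => / 2 * (Y ^ n * / INR (Factorial.fact n) + (- Y) ^ n * / INR (Factorial.fact n))) (cosh Y)).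
  { unfold cosh. replace ((exp Y + exp (- Y)) / 2) with (/2 * (exp Y + exp (-Y))) by field.
    apply is_series_scalR. apply is_series_plusR.
    eapply is_series_extR; [|exact H1]. intros n. simpl. rewrite pow_n_pow. reflexivity.
    eapply is_series_extR; [|exact H2]. intros n. simpl. rewrite pow_n_pow. reflexivity. }
  apply is_series_even in H.
  - unfold cos_pi_sqrt. apply is_series_unique. eapply is_series_extR; [|exact H].
    intros n. cbv beta. rewrite !pow_mult.
    replace ((-Y)^2) with (Y^2) by ring. rewrite HY2.
    replace (-(PI^2)*z) with (PI^2 * - z) by ring. field.
    apply not_0_INR, Factorial.fact_neq_0.
  - intros m. cbv beta. rewrite !pow_add, !pow_mult. replace ((-Y)^2) with (Y^2) by ring. ring.
Qed.

Lemma sqrt4 w : 0 <= w -> sqrt (4 * w) = 2 * sqrt w.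
Proof.
  intros Hw. rewrite sqrt_mult by lra. f_equal. replace 4 with (2*2) by ring.
  apply sqrt_square. lra.
Qed.

Lemma Tf0_cot z : 0 < z < 1 -> Tf z 0 = PI * cos (PI*z) / sin (PI*z).
Proof.
  intros Hz. unfold Tf. replace (2*PI*0) with 0 by ring. rewrite cosh_0.
  replace (2*PI*z) with (2*(PI*z)) by ring. rewrite sin_2a, cos_2a_sin.
  assert (0 < sin (PI*z)) by (apply sin_gt_0; pose proof PI_RGT_0; nra).
  field. split; apply Rgt_not_eq; nra.
Qed.

Theorem key_identity b w : 0 < b < 1/2 -> -b^2 < w ->
  is_series (fun k => (INR k + b) / ((INR k + b)^2 + w) - (INR k + 1 - b) / ((INR k + 1 - b)^2 + w))
   (PI * sin (2*PI*b) / (cos_pi_sqrt (-4*w) - cos (2*PI*b))).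
Proof.
  intros Hb Hw. destruct (Rle_lt_dec 0 w) as [Hw0|Hw0].
  - set (e := sqrt w).
    assert (He2 : e^2 = w) by (unfold e; simpl; rewrite Rmult_1_r; apply sqrt_sqrt; auto).
    assert (He : 0 <= e) by apply sqrt_pos.
    rewrite cps_neg by lra. replace (- (-4 * w)) with (4 * w) by ring. rewrite sqrt4 by auto.
    fold e. replace (PI * (2 * e)) with (2*PI*e) by ring.
    apply (is_series_extR (fun k => phi e (INR k + b) - phi e (INR k + 1 - b))).
    intros k. unfold phi. rewrite He2. auto.
    apply Tf_series; auto.
  - set (c := sqrt (- w)).
    assert (Hc2 : c^2 = -w) by (unfold c; simpl; rewrite Rmult_1_r; apply sqrt_sqrt; lra).
    assert (Hc : 0 < c) by (apply sqrt_lt_R0; lra).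
    assert (Hcb : c < b) by nra.
    rewrite cps_pos by lra. replace (-4 * w) with (4 * (- w)) by ring. rewrite sqrt4 by lra. fold c.
    apply (is_series_extR (fun k => /2 * ((/ (INR k + (b - c)) - / (INR k + 1 - (b - c)))
                                     + (/ (INR k + (b + c)) - / (INR k + 1 - (b + c)))))).
    { intros k. pose proof (pos_INR k). cbv beta. replace w with (- c^2) by lra.
      field. repeat split; nra. }
    replace (PI * sin (2 * PI * b) / (cos (PI * (2 * c)) - cos (2 * PI * b))) with
      (/2 * (Tf (b - c) 0 + Tf (b + c) 0)).
    + apply is_series_scalR. apply is_series_plusR; apply cot_series; lra.
    + rewrite !Tf0_cot by lra.
      set (A := PI * (b - c)). set (B := PI * (b + c)).
      replace (2 * PI * b) with (A + B) by (unfold A, B; ring).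
      replace (PI * (2 * c)) with (B - A) by (unfold A, B; ring).
      rewrite sin_plus, cos_plus, cos_minus.
      pose proof PI_RGT_0.
      assert (0 < sin A) by (apply sin_gt_0; unfold A; nra).
      assert (0 < sin B) by (apply sin_gt_0; unfold B; nra).
      field. repeat split; apply Rgt_not_eq; nra.
Qed.

Definition al (mu Lam x : R) (n : nat) := Lam * (INR n * (INR n + mu)) + x.
Definition be (mu Lam x : R) (n : nat) := Lam * ((INR n + 1) * (INR n + 1 - mu)) + x.
Definition gt (mu Lam x : R) (n : nat) (u : R) :=
  (INR n + mu/2) * exp (- al mu Lam x n * u) - (INR n + 1 - mu/2) * exp (- be mu Lam x n * u).
Definition Gt (mu Lam x : R) (n : nat) (u : R) :=
  - (INR n + mu/2) * exp (- al mu Lam x n * u) / al mu Lam x n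
  + (INR n + 1 - mu/2) * exp (- be mu Lam x n * u) / be mu Lam x n.

Lemma exp_pow y n : exp y ^ n = exp (INR n * y).
Proof.
  induction n. simpl. rewrite Rmult_0_l, exp_0. auto.
  rewrite S_INR. simpl pow. rewrite IHn. rewrite <- exp_plus. f_equal. ring.
Qed.

Lemma exp_le y z : y <= z -> exp y <= exp z.
Proof. intros [H|H]. apply Rlt_le, exp_increasing; auto. subst; lra. Qed.

Lemma pos_eq mu Lam u n : theta_term mu (exp (- Lam * u)) (Z.of_nat n) =
  (INR n + mu/2) * exp (- (Lam * (INR n * (INR n + mu))) * u).
Proof.
  unfold theta_term, Rpower. rewrite ln_exp, <- INR_IZR_INZ. f_equal. f_equal. ring.
Qed.

Lemma neg_eq mu Lam u n : theta_term mu (exp (- Lam * u)) (- Z.of_nat (S n)) =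
  - (INR n + 1 - mu/2) * exp (- (Lam * ((INR n + 1) * (INR n + 1 - mu))) * u).
Proof.
  unfold theta_term, Rpower. rewrite ln_exp, opp_IZR, <- INR_IZR_INZ, S_INR.
  replace (- (INR n + 1) + mu / 2) with (- (INR n + 1 - mu/2)) by ring. f_equal. f_equal. ring.
Qed.

Lemma ex_series_geomlin q : 0 < q < 1 -> ex_series (fun n => (INR n + 1) * q ^ n).
Proof.
  intros Hq. apply ex_series_Rabs.
  apply (ex_series_DAlembert _ q). lra.
  - intros n. pose proof (pos_INR n). apply Rgt_not_eq. apply Rmult_lt_0_compat. lra. apply pow_lt; lra.
  - apply (is_lim_seq_ext (fun n => (1 + / (INR n + 1)) * q)).
    + intros n. pose proof (pos_INR n). rewrite S_INR. simpl pow.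
      assert (0 < q ^ n) by (apply pow_lt; lra).
      rewrite Rabs_right. field. split; lra.
      apply Rle_ge. unfold Rdiv. apply Rmult_le_pos. apply Rmult_le_pos. lra. apply Rmult_le_pos; lra.
      apply Rlt_le, Rinv_0_lt_compat. apply Rmult_lt_0_compat; lra.
    + replace (Finite q) with (Finite ((1 + 0) * q)) by (f_equal; ring).
      apply is_lim_seq_mult'; [|apply is_lim_seq_const].
      apply is_lim_seq_plus'. apply is_lim_seq_const.
      assert (H2 : is_lim_seq (fun n => INR n + 1) p_infty).
      { eapply is_lim_seq_plus. apply is_lim_seq_INR. apply is_lim_seq_const. simpl. constructor. }
      apply (is_lim_seq_inv _ _ H2). discriminate.
Qed.

Lemma INR_nn mu n : 0 <= mu -> INR n <= INR n * (INR n + mu).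
Proof.
  intros Hm. destruct n. simpl. lra. rewrite S_INR. pose proof (pos_INR n). nra.
Qed.

Set Default Proof Using "All".
Section Params.
Variables mu Lam x : R.
Hypothesis Hmu : 0 < mu < 1.
Hypothesis HLam : 0 < Lam.
Hypothesis Hx : 0 < x.

Lemma al_ge n : Lam * INR n + x <= al mu Lam x n.
Proof. unfold al. pose proof (pos_INR n). assert (INR n <= INR n * (INR n + mu)) by (apply INR_nn; lra). nra. Qed.

Lemma be_ge n : Lam * INR n + x <= be mu Lam x n.
Proof. unfold be. pose proof (pos_INR n). assert (INR n <= (INR n + 1) * (INR n + 1 - mu)) by nra. nra. Qed.

Lemma al_pos n : 0 < al mu Lam x n.
Proof. pose proof (al_ge n). pose proof (pos_INR n). nra. Qed.
Lemma be_pos n : 0 < be mu Lam x n.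
Proof. pose proof (be_ge n). pose proof (pos_INR n). nra. Qed.

Lemma gt_dom a u n : 0 < a -> a <= u -> Rabs (gt mu Lam x n u) <= 2 * ((INR n + 1) * exp (- Lam * a) ^ n).
Proof.
  intros Ha Hu. unfold gt. rewrite exp_pow. pose proof (pos_INR n).
  assert (H1 : exp (- al mu Lam x n * u) <= exp (INR n * (- Lam * a))).
  { apply exp_le. pose proof (al_ge n).
    assert ((Lam * INR n + x) * u <= al mu Lam x n * u) by (apply Rmult_le_compat_r; lra).
    assert (0 <= Lam * INR n * (u - a)) by (apply Rmult_le_pos; [apply Rmult_le_pos|]; lra).
    nra. }
  assert (H2 : exp (- be mu Lam x n * u) <= exp (INR n * (- Lam * a))).
  { apply exp_le. pose proof (be_ge n).
    assert ((Lam * INR n + x) * u <= be mu Lam x n * u) by (apply Rmult_le_compat_r; lra).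
    assert (0 <= Lam * INR n * (u - a)) by (apply Rmult_le_pos; [apply Rmult_le_pos|]; lra).
    nra. }
  pose proof (exp_pos (- al mu Lam x n * u)). pose proof (exp_pos (- be mu Lam x n * u)).
  eapply Rle_trans. apply Rabs_triang. rewrite Rabs_Ropp, !Rabs_mult.
  rewrite (Rabs_right (exp _)) by lra. rewrite (Rabs_right (exp (- be _ _ _ _ * _))) by lra.
  rewrite !Rabs_right by lra. nra.
Qed.

Lemma ex_series_gt u : 0 < u -> ex_series (fun n => gt mu Lam x n u).
Proof.
  intros Hu. apply (ex_series_dom _ (fun n => 2 * ((INR n + 1) * exp (- Lam * u) ^ n))).
  intros; apply gt_dom; lra.
  apply (ex_series_scal_l 2 (fun n => (INR n + 1) * exp (- Lam * u) ^ n)).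
  apply ex_series_geomlin. split. apply exp_pos. rewrite <- exp_0. apply exp_increasing. nra.
Qed.

Lemma theta_series u : 0 < u ->
  theta mu (exp (- Lam * u)) * exp (- u * x) = Series (fun n => gt mu Lam x n u).
Proof.
  intros Hu. unfold theta.
  set (q := exp (- Lam * u)).
  assert (Hq : 0 < q < 1). { split. apply exp_pos. unfold q. rewrite <- exp_0. apply exp_increasing. nra. }
  assert (Hb : forall n, exp (- (Lam * (INR n * (INR n + mu))) * u) <= q ^ n).
  { intros n. unfold q. rewrite exp_pow. apply exp_le. pose proof (pos_INR n).
    pose proof (INR_nn mu n ltac:(lra)).
    assert (0 <= Lam * u * (INR n * (INR n + mu) - INR n)) by (apply Rmult_le_pos; [apply Rmult_le_pos|]; lra).
    nra. }
  assert (Hb' : forall n, exp (- (Lam * ((INR n + 1) * (INR n + 1 - mu))) * u) <= q ^ n).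
  { intros n. unfold q. rewrite exp_pow. apply exp_le. pose proof (pos_INR n).
    assert (INR n <= (INR n + 1) * (INR n + 1 - mu)) by nra.
    assert (0 <= Lam * u * ((INR n + 1) * (INR n + 1 - mu) - INR n)) by (apply Rmult_le_pos; [apply Rmult_le_pos|]; lra).
    nra. }
  assert (Hex1 : ex_series (fun n => theta_term mu q (Z.of_nat n))).
  { apply (ex_series_dom _ (fun n => (INR n + 1) * q ^ n)); [|apply ex_series_geomlin; auto].
    intros n. unfold q. rewrite pos_eq. fold q. pose proof (pos_INR n). specialize (Hb n).
    pose proof (exp_pos (- (Lam * (INR n * (INR n + mu))) * u)).
    rewrite Rabs_mult, !Rabs_right by lra. nra. }
  assert (Hex2 : ex_series (fun n => theta_term mu q (- Z.of_nat (S n)))).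
  { apply (ex_series_dom _ (fun n => (INR n + 1) * q ^ n)); [|apply ex_series_geomlin; auto].
    intros n. unfold q. rewrite neg_eq. fold q. pose proof (pos_INR n). specialize (Hb' n).
    pose proof (exp_pos (- (Lam * ((INR n + 1) * (INR n + 1 - mu))) * u)).
    rewrite Rabs_mult, Rabs_Ropp, !Rabs_right by lra. nra. }
  rewrite <- Series_plus by auto. rewrite Rmult_comm, <- Series_scal_l.
  apply Series_ext. intros n. unfold q. rewrite pos_eq, neg_eq. unfold gt, al, be.
  replace (- (Lam * (INR n * (INR n + mu)) + x) * u) with (- (Lam * (INR n * (INR n + mu))) * u + - u * x) by ring.
  replace (- (Lam * ((INR n + 1) * (INR n + 1 - mu)) + x) * u) with (- (Lam * ((INR n + 1) * (INR n + 1 - mu))) * u + - u * x) by ring.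
  rewrite !exp_plus. ring.
Qed.

End Params.

Set Default Proof Using "All".
Section Params.
Variables mu Lam x : R.
Hypothesis Hmu : 0 < mu < 1.
Hypothesis HLam : 0 < Lam.
Hypothesis Hx : 0 < x.

Lemma Gt_deriv n u : is_derive (Gt mu Lam x n) u (gt mu Lam x n u).
Proof.
  pose proof (al_pos mu Lam x Hmu HLam Hx n). pose proof (be_pos mu Lam x Hmu HLam Hx n).
  unfold Gt, gt. auto_derive. auto. field. split; lra.
Qed.

Lemma gt_cont n u : continuous (gt mu Lam x n) u.
Proof. apply (ex_derive_continuous (K:=R_AbsRing) (V:=R_NormedModule)). unfold gt. auto_derive. auto. Qed.

Lemma is_RInt_gt n a c : is_RInt (gt mu Lam x n) a c (Gt mu Lam x n c - Gt mu Lam x n a).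
Proof.
  apply (is_RInt_derive (Gt mu Lam x n) (gt mu Lam x n)).
  intros; apply Gt_deriv. intros; apply gt_cont.
Qed.

Lemma is_RInt_sk N a c : is_RInt (fun u => sk (fun n => gt mu Lam x n u) N) a c
   (sk (fun n => Gt mu Lam x n c - Gt mu Lam x n a) N).
Proof.
  induction N; simpl.
  - pose proof (is_RInt_const (V := R_NormedModule) a c 0) as H. change (scal (c - a) 0) with ((c - a) * 0) in H. rewrite Rmult_0_r in H. exact H.
  - exact (is_RInt_plus _ _ a c _ _ IHN (is_RInt_gt N a c)).
Qed.

Lemma is_RInt_theta a c : 0 < a < c ->
  is_RInt (fun u => theta mu (exp (- Lam * u)) * exp (- u * x)) a c
    (Series (fun n => Gt mu Lam x n c - Gt mu Lam x n a)).
Proof.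
  intros Hac.
  set (clamp := fun u => Rmax a (Rmin c u)).
  assert (Hcl : forall u, a <= clamp u <= c).
  { intros u. unfold clamp. split. apply Rmax_l. apply Rmax_lub. lra. apply Rmin_l. }
  assert (Hcl2 : forall u, a < u < c -> clamp u = u).
  { intros u Hu. unfold clamp. rewrite Rmin_right by lra. rewrite Rmax_right by lra. auto. }
  set (g := fun u => Series (fun n => gt mu Lam x n (clamp u))).
  set (fN := fun (N : nat) (u : R) => sk (fun n => gt mu Lam x n (clamp u)) N).
  set (h := fun N => sk (fun n => Gt mu Lam x n c - Gt mu Lam x n a) N).
  assert (Hint : forall N, is_RInt (fN N) a c (h N)).
  { intros N. eapply is_RInt_ext; [|apply is_RInt_sk].
    intros u Hu. rewrite Rmin_left, Rmax_right in Hu by lra. unfold fN. rewrite Hcl2; auto. }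
  set (M := fun n => 2 * ((INR n + 1) * exp (- Lam * a) ^ n)).
  assert (HM : ex_series M).
  { apply (ex_series_scal_l 2 (fun n => (INR n + 1) * exp (- Lam * a) ^ n)).
    apply ex_series_geomlin. split. apply exp_pos. rewrite <- exp_0. apply exp_increasing. nra. }
  assert (HMpos : forall n, 0 <= M n).
  { intros n. unfold M. pose proof (pos_INR n). pose proof (exp_pos (- Lam * a)).
    apply Rmult_le_pos. lra. apply Rmult_le_pos. lra. apply pow_le. lra. }
  assert (Hunif : filterlim fN eventually (locally (g : fct_UniformSpace R R_CompleteNormedModule))).
  { apply filterlim_locally. intros eps.
    destruct (tail_small M eps HM (cond_pos eps)) as [N0 HN0].
    exists N0. intros N HN t. apply ball_R.
    unfold fN, g. rewrite Rabs_minus_sym.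
    eapply Rle_lt_trans. apply (tail_bound _ M N).
    intros n. apply (gt_dom mu Lam x Hmu HLam Hx a); [lra|apply Hcl]. auto.
    pose proof (sk_mono M N0 N HMpos HN).
    pose proof (Rle_abs (Series M - sk M N0)). lra. }
  destruct (filterlim_RInt fN a c eventually eventually_filter g h Hint Hunif) as [If [HIf HgI]].
  assert (HS : Series (fun n => Gt mu Lam x n c - Gt mu Lam x n a) = If).
  { apply is_series_unique. unfold is_series.
    apply (filterlim_ext (fun N => h (S N))).
    intros N. unfold h. rewrite sk_sumf, sum_n_Reals. reflexivity.
    apply (is_lim_seq_incr_1 h If). exact HIf. }
  rewrite HS. eapply is_RInt_ext; [|exact HgI].
  intros u Hu. rewrite Rmin_left, Rmax_right in Hu by lra.
  unfold g. rewrite Hcl2 by auto. symmetry. apply theta_series; auto. lra.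
Qed.

End Params.

Lemma flim_plusR {T} (F : (T -> Prop) -> Prop) {FF : Filter F} (f g : T -> R) lf lg :
  filterlim f F (locally lf) -> filterlim g F (locally lg) -> filterlim (fun p => f p + g p) F (locally (lf + lg)).
Proof.
  intros Hf Hg. eapply filterlim_comp_2. exact Hf. exact Hg.
  exact (filterlim_plus (K:=R_AbsRing) (V:=R_NormedModule) lf lg).
Qed.

Lemma flim_multR {T} (F : (T -> Prop) -> Prop) {FF : Filter F} (f g : T -> R) lf lg :
  filterlim f F (locally lf) -> filterlim g F (locally lg) -> filterlim (fun p => f p * g p) F (locally (lf * lg)).
Proof.
  intros Hf Hg. eapply filterlim_comp_2. exact Hf. exact Hg.
  exact (filterlim_mult (K:=R_AbsRing) lf lg).
Qed.

Lemma exp_lim_inf k : 0 < k -> filterlim (fun c => exp (- k * c)) (Rbar_locally p_infty) (locally 0).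
Proof.
  intros Hk. apply filterlim_locally. intros eps. pose proof (cond_pos eps) as He.
  exists (/ (k * eps)). intros c Hc. apply ball_R. rewrite Rminus_0_r.
  rewrite Rabs_right by (apply Rle_ge, Rlt_le, exp_pos).
  assert (Hkc : 0 < k * c).
  { assert (0 < / (k * eps)) by (apply Rinv_0_lt_compat; nra). nra. }
  replace (- k * c) with (- (k * c)) by ring. rewrite exp_Ropp.
  pose proof (exp_ineq1_le (k * c)).
  apply Rle_lt_trans with (/ (1 + k * c)). apply Rinv_le_contravar; lra.
  apply Rmult_lt_reg_l with (1 + k*c). lra. rewrite Rinv_r by lra.
  apply Rmult_lt_reg_l with (/ eps). apply Rinv_0_lt_compat; lra.
  assert (k * c > / eps).
  { apply Rmult_lt_compat_l with (r := k) in Hc; auto.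
    replace (k * / (k * eps)) with (/ eps) in Hc by (field; lra). lra. }
  replace (/ eps * ((1 + k * c) * eps)) with (1 + k*c) by (field; lra). lra.
Qed.

Set Default Proof Using "All".
Section Params.
Variables mu Lam x : R.
Hypothesis Hmu : 0 < mu < 1.
Hypothesis HLam : 0 < Lam.
Hypothesis Hx : 0 < x.

Let al' := al mu Lam x.
Let be' := be mu Lam x.

Lemma be_al n : be' n - al' n = Lam * (2 * INR n + 1) * (1 - mu).
Proof. unfold be', al', be, al. ring. Qed.

Definition Dn n := Rabs (Gt mu Lam x n 0) + (INR n + 1) * (be' n - al' n) / (al' n * be' n).

Lemma Gt_bound n v : 0 <= v -> Rabs (Gt mu Lam x n v) <= Dn n.
Proof.
  intros Hv. unfold Dn.
  pose proof (al_pos mu Lam x Hmu HLam Hx n) as Ha. pose proof (be_pos mu Lam x Hmu HLam Hx n) as Hb.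
  fold al' in Ha. fold be' in Hb.
  set (d := be' n - al' n).
  assert (Hd : 0 <= d) by (unfold d; rewrite be_al; pose proof (pos_INR n);
     apply Rmult_le_pos; [apply Rmult_le_pos|]; lra).
  set (E := exp (- al' n * v)). set (Fe := exp (- d * v)).
  assert (HE : 0 < E <= 1). { split. apply exp_pos. unfold E. rewrite <- exp_0. apply exp_le. nra. }
  assert (HF : 0 < Fe <= 1). { split. apply exp_pos. unfold Fe. rewrite <- exp_0. apply exp_le. nra. }
  assert (HF1 : 1 - Fe <= d * v). { unfold Fe. pose proof (exp_ineq1_le (- d * v)). lra. }
  assert (HEa : E * (al' n * v) <= 1).
  { unfold E. pose proof (exp_ineq1_le (al' n * v)).
    replace (- al' n * v) with (- (al' n * v)) by ring. rewrite exp_Ropp.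
    pose proof (exp_pos (al' n * v)).
    apply Rmult_le_reg_r with (exp (al' n * v)); auto.
    replace (/ exp (al' n * v) * (al' n * v) * exp (al' n * v)) with (al' n * v) by (field; lra). lra. }
  set (A := INR n + mu / 2). set (B := INR n + 1 - mu / 2).
  assert (HA : 0 < A) by (unfold A; pose proof (pos_INR n); lra).
  assert (HB : 0 < B <= INR n + 1) by (unfold B; pose proof (pos_INR n); lra).
  assert (HG : Gt mu Lam x n v = E * Gt mu Lam x n 0 - B / be' n * E * (1 - Fe)).
  { unfold Gt. fold al' be'. fold A B. rewrite !Rmult_0_r, exp_0.
    replace (- be' n * v) with (- al' n * v + - d * v) by (unfold d; ring). rewrite exp_plus. fold E Fe.
    field. split; lra. }
  rewrite HG.
  eapply Rle_trans. apply Rabs_triang. rewrite Rabs_Ropp.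
  rewrite Rabs_mult, (Rabs_right E) by lra.
  assert (H1 : E * Rabs (Gt mu Lam x n 0) <= Rabs (Gt mu Lam x n 0)).
  { pose proof (Rabs_pos (Gt mu Lam x n 0)). nra. }
  assert (H2 : Rabs (B / be' n * E * (1 - Fe)) <= (INR n + 1) * d / (al' n * be' n)).
  { rewrite Rabs_right.
    2: { apply Rle_ge. apply Rmult_le_pos. apply Rmult_le_pos. apply Rlt_le, Rdiv_lt_0_compat; lra. lra. lra. }
    apply Rle_trans with (B / be' n * (E * (d * v))).
    { rewrite Rmult_assoc. apply Rmult_le_compat_l. apply Rlt_le, Rdiv_lt_0_compat; lra.
      apply Rmult_le_compat_l; lra. }
    assert (E * (d * v) <= d / al' n).
    { apply Rmult_le_reg_r with (al' n); auto. replace (d / al' n * al' n) with d by (field; lra).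
      replace (E * (d * v) * al' n) with (d * (E * (al' n * v))) by ring. nra. }
    apply Rle_trans with (B / be' n * (d / al' n)).
    { apply Rmult_le_compat_l; auto. apply Rlt_le, Rdiv_lt_0_compat; lra. }
    replace (B / be' n * (d / al' n)) with (B * d / (al' n * be' n)) by (field; lra).
    unfold Rdiv. apply Rmult_le_compat_r. apply Rlt_le, Rinv_0_lt_compat; nra.
    apply Rmult_le_compat_r; lra. }
  lra.
Qed.

Lemma Dn_summable : ex_series Dn.
Proof.
  set (m := Rmin Lam x).
  assert (Hm : 0 < m) by (unfold m; apply Rmin_glb_lt; auto).
  assert (HmL : m <= Lam) by apply Rmin_l. assert (Hmx : m <= x) by apply Rmin_r.
  set (K := 4 * (x + 3 * Lam) / m^2).
  apply (ex_series_dom _ (fun n => K * / (INR n + 1)^2)).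
  2: { apply (ex_series_scal_l K (fun n => / (INR n + 1)^2)). apply ex_series_invsq. }
  intros n. unfold Dn.
  pose proof (al_pos mu Lam x Hmu HLam Hx n) as Ha. pose proof (be_pos mu Lam x Hmu HLam Hx n) as Hb.
  fold al' in Ha. fold be' in Hb.
  pose proof (pos_INR n) as Hn. set (N1 := INR n + 1).
  assert (Hal : m * N1^2 / 2 <= al' n).
  { unfold al', al, N1. assert (INR n * INR n <= INR n * (INR n + mu)) by nra.
    assert (m * (INR n * INR n) <= Lam * (INR n * INR n)) by (apply Rmult_le_compat_r; nra).
    assert (Lam * (INR n * INR n) <= Lam * (INR n * (INR n + mu))) by (apply Rmult_le_compat_l; lra).
    assert (m * (INR n * INR n + 1) <= Lam * (INR n * (INR n + mu)) + x) by lra.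
    assert (0 <= m * (INR n - 1)^2) by (apply Rmult_le_pos; [lra|apply pow2_ge_0]).
    assert (m * (INR n + 1)^2 / 2 = m * (INR n * INR n + 1) - m * (INR n - 1)^2 / 2) by field. lra. }
  assert (Hbe : m * N1^2 / 2 <= be' n).
  { unfold be', be, N1. assert (INR n * (INR n + 1) <= (INR n + 1) * (INR n + 1 - mu)) by nra.
    assert (m * (INR n * (INR n + 1)) <= Lam * (INR n * (INR n + 1))) by (apply Rmult_le_compat_r; nra).
    assert (Lam * (INR n * (INR n + 1)) <= Lam * ((INR n + 1) * (INR n + 1 - mu))) by (apply Rmult_le_compat_l; lra).
    assert (m * (INR n * (INR n + 1) + 1) <= Lam * ((INR n + 1) * (INR n + 1 - mu)) + x) by lra.
    assert (0 <= m * (INR n * INR n + 1)) by (apply Rmult_le_pos; [lra|nra]).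
    assert (m * (INR n + 1)^2 / 2 = m * (INR n * (INR n + 1) + 1) - m * (INR n * INR n + 1) / 2) by field. lra. }
  assert (HG0 : Gt mu Lam x n 0 = (1 - mu) * (x - Lam * (INR n * INR n + INR n + mu / 2)) / (al' n * be' n)).
  { unfold Gt. fold al' be'. rewrite !Rmult_0_r, exp_0. unfold al', be', al, be. field. split.
    - pose proof (be_pos mu Lam x Hmu HLam Hx n). unfold be in H. lra.
    - pose proof (al_pos mu Lam x Hmu HLam Hx n). unfold al in H. lra. }
  assert (Hab : 0 < al' n * be' n) by nra.
  assert (Hnum : Rabs ((1 - mu) * (x - Lam * (INR n * INR n + INR n + mu / 2))) <= (x + Lam) * N1^2).
  { rewrite Rabs_mult, Rabs_right by lra.
    apply Rle_trans with (1 * ((x + Lam) * N1^2)); [|lra].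
    apply Rmult_le_compat. lra. apply Rabs_pos. lra.
    apply Rabs_le. unfold N1. split; nra. }
  rewrite HG0. unfold Rdiv at 1. rewrite Rabs_mult, (Rabs_right (/ _)) by (apply Rle_ge, Rlt_le, Rinv_0_lt_compat; auto).
  rewrite Rabs_right.
  2: { apply Rle_ge. apply Rplus_le_le_0_compat. apply Rmult_le_pos. apply Rabs_pos. apply Rlt_le, Rinv_0_lt_compat; auto.
       rewrite be_al. unfold N1. apply Rmult_le_pos; [apply Rmult_le_pos; [lra| apply Rmult_le_pos; [apply Rmult_le_pos; lra | lra]] | apply Rlt_le, Rinv_0_lt_compat; auto]. }
  rewrite be_al. fold N1.
  assert (Hsec : N1 * (Lam * (2 * INR n + 1) * (1 - mu)) <= 2 * Lam * N1^2).
  { unfold N1. assert (0 <= Lam * mu * (2 * INR n + 1)) by (apply Rmult_le_pos; [|lra]; nra). nra. }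
  apply Rle_trans with ((x + 3 * Lam) * N1^2 / (al' n * be' n)).
  { replace ((x + 3 * Lam) * N1^2 / (al' n * be' n)) with
      ((x + Lam) * N1^2 * / (al' n * be' n) + 2 * Lam * N1^2 / (al' n * be' n)) by (field; lra).
    apply Rplus_le_compat. apply Rmult_le_compat_r. apply Rlt_le, Rinv_0_lt_compat; auto. auto.
    unfold Rdiv. apply Rmult_le_compat_r. apply Rlt_le, Rinv_0_lt_compat; auto. auto. }
  assert (HN1 : 0 < N1) by (unfold N1; lra).
  assert (Hprod : m^2 * N1^4 / 4 <= al' n * be' n).
  { replace (m^2 * N1^4/4) with ((m * N1^2/2) * (m * N1^2/2)) by field.
    apply Rmult_le_compat; try lra. apply Rlt_le. apply Rmult_lt_0_compat. apply Rmult_lt_0_compat. lra. apply pow_lt; lra. lra. 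
    apply Rlt_le. apply Rmult_lt_0_compat. apply Rmult_lt_0_compat. lra. apply pow_lt; lra. lra. }
  unfold K. replace (4 * (x + 3 * Lam) / m ^ 2 * / N1 ^ 2) with ((x + 3 * Lam) * N1^2 / (m^2 * N1^4 / 4))
    by (field; split; lra).
  unfold Rdiv. apply Rmult_le_compat_l. apply Rmult_le_pos. lra. apply pow_le; lra.
  apply Rinv_le_contravar. apply Rmult_lt_0_compat. apply Rmult_lt_0_compat. apply pow_lt; lra. apply pow_lt; lra. lra.
  auto.
Qed.

End Params.

Lemma flim_constR {T} (F : (T -> Prop) -> Prop) {FF : Filter F} (c : R) :
  filterlim (fun _ => c) F (locally c).
Proof. apply filterlim_const. Qed.

Set Default Proof Using "All".
Section Params.
Variables mu Lam x : R.
Hypothesis Hmu : 0 < mu < 1.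
Hypothesis HLam : 0 < Lam.
Hypothesis Hx : 0 < x.

Lemma Gt_lim_inf n : filterlim (fun c => Gt mu Lam x n (Rmax 0 c)) (Rbar_locally p_infty) (locally 0).
Proof.
  pose proof (al_pos mu Lam x Hmu HLam Hx n). pose proof (be_pos mu Lam x Hmu HLam Hx n).
  apply (filterlim_ext_loc (fun c => (- (INR n + mu/2) / al mu Lam x n) * exp (- al mu Lam x n * c)
                                   + ((INR n + 1 - mu/2) / be mu Lam x n) * exp (- be mu Lam x n * c))).
  - exists 0. intros c Hc. rewrite Rmax_right by lra. unfold Gt. field. split; lra.
  - set (c1 := - (INR n + mu/2) / al mu Lam x n). set (c2 := (INR n + 1 - mu/2) / be mu Lam x n).
    cut (filterlim (fun c => c1 * exp (- al mu Lam x n * c) + c2 * exp (- be mu Lam x n * c))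
      (Rbar_locally p_infty) (locally (c1 * 0 + c2 * 0))).
    { intros Hc. replace (c1 * 0 + c2 * 0) with 0 in Hc by ring. exact Hc. }
    apply (flim_plusR (Rbar_locally p_infty)); try apply (flim_multR (Rbar_locally p_infty));
    repeat first [apply flim_constR | (apply exp_lim_inf; auto) | apply (@filter_filter _ _ (Rbar_locally_filter p_infty))].
Qed.

Lemma Gt_lim_0 n : filterlim (fun a => Gt mu Lam x n (Rmax 0 a)) (at_right 0) (locally (Gt mu Lam x n 0)).
Proof.
  apply (filterlim_ext_loc (Gt mu Lam x n)).
  - exists (mkposreal 1 Rlt_0_1). intros a _ Ha. rewrite Rmax_right by lra. auto.
  - apply (filterlim_filter_le_1 (F := locally 0)). apply filter_le_within.
    apply (ex_derive_continuous (K:=R_AbsRing) (V:=R_NormedModule)).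
    eexists. apply Gt_deriv; auto.
Qed.

Lemma series_lim :
  filterlim (fun p : R * R => Series (fun n => Gt mu Lam x n (Rmax 0 (snd p)) - Gt mu Lam x n (Rmax 0 (fst p))))
    (filter_prod (at_right 0) (Rbar_locally p_infty))
    (locally (Series (fun n => 0 + - Gt mu Lam x n 0))).
Proof.
  apply (tannery _ _ _ (fun n => 2 * Dn mu Lam x n)).
  - intros n. apply (flim_plusR _ (FF := @filter_filter _ _ (@filter_prod_proper _ _ _ _ (at_right_proper_filter 0) (Rbar_locally_filter p_infty)))).
    + apply (filterlim_comp _ _ _ snd (fun c => Gt mu Lam x n (Rmax 0 c)) _ (Rbar_locally p_infty)). apply filterlim_snd. apply Gt_lim_inf.
    + apply (filterlim_comp _ _ _ (fun p : R * R => Gt mu Lam x n (Rmax 0 (fst p))) (fun y : R => - y) _ (locally (Gt mu Lam x n 0))).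
      apply (filterlim_comp _ _ _ fst (fun c => Gt mu Lam x n (Rmax 0 c)) _ (at_right 0)). apply filterlim_fst. apply Gt_lim_0.
      exact (filterlim_opp (K:=R_AbsRing) (V:=R_NormedModule) (Gt mu Lam x n 0)).
  - intros p n. unfold Rminus. eapply Rle_trans. apply Rabs_triang. rewrite Rabs_Ropp.
    pose proof (Gt_bound mu Lam x Hmu HLam Hx n (Rmax 0 (snd p)) (Rmax_l _ _)).
    pose proof (Gt_bound mu Lam x Hmu HLam Hx n (Rmax 0 (fst p)) (Rmax_l _ _)). lra.
  - apply (ex_series_scal_l 2 (Dn mu Lam x)). apply Dn_summable; auto.
Qed.

Lemma series_value :
  Series (fun n => 0 + - Gt mu Lam x n 0) =
  / Lam * (PI * sin (PI * mu) / (cos_pi_sqrt (mu ^ 2 - 4 * x / Lam) - cos (PI * mu))).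
Proof.
  set (b := mu / 2). set (w := x / Lam - b^2).
  assert (Hb : 0 < b < 1/2) by (unfold b; lra).
  assert (Hw : - b^2 < w) by (unfold w; assert (0 < x / Lam) by (apply Rdiv_lt_0_compat; lra); lra).
  pose proof (key_identity b w Hb Hw) as K.
  apply is_series_scalR with (c := / Lam) in K.
  apply is_series_unique. replace (mu ^ 2 - 4 * x / Lam) with (-4 * w) by (unfold w, b; field; lra).
  replace (PI * mu) with (2 * PI * b) by (unfold b; field).
  eapply is_series_extR; [|exact K]. intros n. cbv beta.
  pose proof (al_pos mu Lam x Hmu HLam Hx n). pose proof (be_pos mu Lam x Hmu HLam Hx n).
  unfold Gt. rewrite !Rmult_0_r, exp_0.
  replace (al mu Lam x n) with (Lam * ((INR n + b)^2 + w)) in * by (unfold al, w, b; field; lra).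
  replace (be mu Lam x n) with (Lam * ((INR n + 1 - b)^2 + w)) in * by (unfold be, w, b; field; lra).
  fold b. field. split; [|split]; try lra; apply Rgt_not_eq; nra.
Qed.

Theorem main_thm :
  is_RInt_gen (fun u : R => theta mu (exp (- Lam * u)) * exp (- u * x))
    (at_right 0) (Rbar_locally p_infty)
    (/ Lam * (PI * sin (PI * mu) / (cos_pi_sqrt (mu ^ 2 - 4 * x / Lam) - cos (PI * mu)))).
Proof.
  rewrite <- series_value.
  intros P HP. pose proof (series_lim P HP) as HS. unfold filtermap in HS.
  assert (Hpos : filter_prod (at_right 0) (Rbar_locally p_infty) (fun p : R * R => 0 < fst p < 1 /\ 1 < snd p)).
  { apply (Filter_prod _ _ _ (fun a => 0 < a < 1) (fun c => 1 < c)).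
    - exists (mkposreal 1 Rlt_0_1). intros y Hy Hy0.
      unfold ball in Hy; simpl in Hy; unfold AbsRing_ball, abs, minus, plus, opp in Hy; simpl in Hy.
      apply Rabs_def2 in Hy. lra.
    - exists 1. auto.
    - intros a c Ha Hc. simpl. auto. }
  unfold filtermapi. eapply filter_imp. 2: exact (filter_and _ _ HS Hpos).
  intros [a c] [HPy [Ha Hc]]. simpl in *.
  exists (Series (fun n => Gt mu Lam x n (Rmax 0 c) - Gt mu Lam x n (Rmax 0 a))). split; auto.
  rewrite (Series_ext _ (fun n => Gt mu Lam x n c - Gt mu Lam x n a)).
  2: { intros n. rewrite !Rmax_right by lra. auto. }
  apply is_RInt_theta; auto. lra.
Qed.

End Params.


Theorem mainTheorem14 (mu Lambda x : R) :
  0 < mu < 1 -> 0 < Lambda -> 0 < x ->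
  is_RInt_gen (fun u : R => theta mu (exp (- Lambda * u)) * exp (- u * x))
    (at_right 0) (Rbar_locally p_infty)
    (/ Lambda * (PI * sin (PI * mu)
        / (cos_pi_sqrt (mu ^ 2 - 4 * x / Lambda) - cos (PI * mu)))).
Proof.
  intros Hmu HL Hx. exact (main_thm mu Lambda x Hmu HL Hx).
Qed.
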